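(* Let $n\in\mathbb{N}$ and consider input sequences $X\in\mathbb{R}^{n\times d_{\text{emb}}}$ with entries bounded in absolute value by $M$. Let $\operatorname{SaturatedAttn}(X;\Gamma_s)$ be a causally masked saturated attention head with parameter norm bounded by $O(1)$, producing outputs $o_1,\dots,o_n\in\mathbb{R}^{d_h}$. Suppose that for each row $i$, if $j\in\mathcal{M}_i$ and $k\le i$, $k\notin\mathcal{M}_i$, then $\mathbf{A}_{ij}-\mathbf{A}_{ik}\ge\delta$ for some $\delta>0$. Then for any $\varepsilon>0$ there exists a standard single-head causal softmax attention function $\operatorname{Attn}(X;\Gamma)$ with parameter norms bounded by $\operatorname{poly}(M,1/\delta,\log n,\log(1/\varepsilon))$ whose outputs $\tilde o_1,\dots,\tilde o_n$ satisfy $\|\tilde o_i - o_i\|_\infty\le\varepsilon$ for all $1\le i\le n$.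
   Context: Saturated masked attention with weights $\Gamma_s=(W_Q,W_K,W_V)$: $\mathbf{A} = XW_Q(XW_K)^\top$, $\mathcal{M}_i = \{j\le i\mid \mathbf{A}_{ij}=\max_{k\le i}\mathbf{A}_{ik}\}$, output $\operatorname{SaturatedAttn}(X;\Gamma_s)_i = \frac{1}{|\mathcal{M}_i|}\sum_{j\in\mathcal{M}_i}X_jW_V$. A causal softmax attention head with parameters $(W_Q',W_K',W_V')$ outputs at row $i$ the vector $\sum_{j\le i}\alpha_{ij}X_jW_V'$ with $\alpha_{ij} = \exp(q_i\cdot k_j)/\sum_{k\le i}\exp(q_i\cdot k_k)$, $q_i = X_iW_Q'$, $k_j = X_jW_K'$. *)

(* Defs.v *)
From HB Require Import structures.
From mathcomp Require Import all_boot all_order all_algebra.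
From mathcomp Require Import all_classical all_reals all_analysis.
Set Implicit Arguments. Unset Strict Implicit. Unset Printing Implicit Defensive.
Import Order.TTheory GRing.Theory Num.Theory.
Local Open Scope ring_scope.

Section Attn.
Variable R : realType.

Definition scores n de dk (X : 'M[R]_(n, de)) (WQ WK : 'M[R]_(de, dk)) : 'M[R]_(n, n) :=
  (X *m WQ) *m (X *m WK)^T.

Definition attn_maxset n (A : 'M[R]_(n, n)) (i : 'I_n) : {set 'I_n} :=
  [set j : 'I_n | (j <= i)%N &&
     [forall k : 'I_n, (k <= i)%N ==> (A i k <= A i j)]].

Definition saturated_attn n de dk dh (X : 'M[R]_(n, de))
  (WQ WK : 'M[R]_(de, dk)) (WV : 'M[R]_(de, dh)) : 'M[R]_(n, dh) :=
  \matrix_(i < n, l < dh)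
    ((#|attn_maxset (scores X WQ WK) i|%:R)^-1 *
      \sum_(j in attn_maxset (scores X WQ WK) i) (X *m WV) j l).

Definition softmax_attn n de dk dh (X : 'M[R]_(n, de))
  (WQ WK : 'M[R]_(de, dk)) (WV : 'M[R]_(de, dh)) : 'M[R]_(n, dh) :=
  let A := scores X WQ WK in
  \matrix_(i < n, l < dh)
    \sum_(j < n | (j <= i)%N)
      (expR (A i j) / \sum_(k < n | (k <= i)%N) expR (A i k)) * (X *m WV) j l.

(* parameter norm: max-entry norm bounded by B *)
Definition mx_bounded m p (W : 'M[R]_(m, p)) (B : R) : Prop :=
  forall i j, `|W i j| <= B.

End Attn.

(* Main.v *)
Require Import Defs.
From HB Require Import structures.
From mathcomp Require Import all_boot all_order all_algebra.
From mathcomp Require Import all_classical all_reals all_analysis.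
From mathcomp Require Import ring lra.
Import Order.TTheory GRing.Theory Num.Theory.
Local Open Scope ring_scope.

Lemma bound_aux (R : realType) (de M C di lnn L : R) :
  0 <= de -> 0 <= M -> 0 <= C -> 0 <= di -> 0 <= lnn -> 0 <= L ->
  di * (lnn + 2 * (de * M * C) + L) * C <= (1 + 2 * de * C) * C * (1 + M + di + lnn + L) ^+ 2
  /\ C <= (1 + 2 * de * C) * C * (1 + M + di + lnn + L) ^+ 2.
Proof.
move=> de0 M0 C0 di0 l0 L0.
set b := 1 + M + di + lnn + L.
have b1 : 1 <= b by rewrite /b; lra.
have c0 : 0 <= de * C by apply: mulr_ge0.
have h1 : lnn + 2 * (de * M * C) + L <= (1 + 2 * de * C) * b.
  have e : (1 + 2 * de * C) * b - (lnn + 2 * (de * M * C) + L)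
     = (1 + M + di) + 2 * (de * C) * (1 + di + lnn + L) by rewrite /b; ring.
  have : 0 <= (1 + M + di) + 2 * (de * C) * (1 + di + lnn + L).
    by apply: addr_ge0; [lra | apply: mulr_ge0; [lra|lra]].
  by rewrite -e subr_ge0.
have h2 : di * (lnn + 2 * (de * M * C) + L) <= b * ((1 + 2 * de * C) * b).
  apply: ler_pM => //.
    by have p := mulr_ge0 (mulr_ge0 de0 M0) C0; lra.
  by rewrite /b; lra.
have b2 : 1 <= b ^+ 2 by rewrite expr2; nra.
have k1 : 1 <= 1 + 2 * de * C by rewrite -mulrA; lra.
split.
  have -> : (1 + 2 * de * C) * C * b ^+ 2 = (b * ((1 + 2 * de * C) * b)) * C by rewrite expr2; ring.
  by apply: ler_wpM2r.
have : 1 <= (1 + 2 * de * C) * b ^+ 2 by nra.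
nra.
Qed.

Arguments bound_aux {R de M C di lnn L}.
Lemma key_ineq (R : realType) (N e Q Sv T V nn x eps : R) :
  1 <= N -> 0 < e -> 0 <= Q -> 0 < eps -> `|Sv| <= N * V -> `|T| <= Q * V ->
  Q <= nn * e * x -> 2 * nn * x * V <= eps ->
  `|(e * Sv + T) / (N * e + Q) - N^-1 * Sv| <= eps.
Proof.
move=> N1 e0 Q0 eps0 hS hT hQ hf.
have N0 : 0 < N by lra.
have V0 : 0 <= V.
  have : 0 <= N * V by apply: le_trans hS.
  by rewrite pmulr_rge0.
have Z0 : 0 < N * e + Q by nra.
rewrite (_ : _ - _ = (N * T - Q * Sv) / (N * (N * e + Q))); last first.
  by field; apply/andP; split; rewrite gt_eqF.
rewrite normrM normfV (gtr0_norm (mulr_gt0 N0 Z0)) ler_pdivrMr ?mulr_gt0 //.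
have h1 : `|N * T - Q * Sv| <= N * `|T| + Q * `|Sv|.
  by apply: le_trans (ler_normB _ _) _; by rewrite !normrM (ger0_norm (ltW N0)) (ger0_norm Q0).
have h2 : N * `|T| <= N * (Q * V) by rewrite ler_pM2l.
have h3 : Q * `|Sv| <= Q * (N * V) by rewrite ler_wpM2l.
have h4 : 2 * Q * V <= eps * e.
  have : 2 * Q * V <= 2 * (nn * e * x) * V by nra.
  move=> h; apply: le_trans h _.
  have -> : 2 * (nn * e * x) * V = (2 * nn * x * V) * e by ring.
  by rewrite ler_pM2r.
have h5 : N * (2 * Q * V) <= N * (eps * e) by rewrite ler_pM2l.
have h6 : eps * e <= eps * (N * e + Q) by rewrite ler_pM2l //; nra.
have h7 : N * (eps * e) <= N * (eps * (N * e + Q)) by rewrite ler_pM2l.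
lra.
Qed.

Arguments key_ineq {R N e Q Sv T V nn x eps}.
Theorem mainTheorem4 (R : realType) (de dk dh : nat) (C : R) :
  exists (K : R) (a : nat),
  forall (n : nat) (M delta eps : R)
         (X : 'M[R]_(n, de)) (WQ WK : 'M[R]_(de, dk)) (WV : 'M[R]_(de, dh)),
    mx_bounded X M ->
    mx_bounded WQ C -> mx_bounded WK C -> mx_bounded WV C ->
    0 < delta ->
    (forall i j k : 'I_n,
        j \in attn_maxset (scores X WQ WK) i -> (k <= i)%N ->
        k \notin attn_maxset (scores X WQ WK) i ->
        delta <= scores X WQ WK i j - scores X WQ WK i k) ->
    0 < eps ->
    exists (WQ' WK' : 'M[R]_(de, dk)) (WV' : 'M[R]_(de, dh)),
      let B := K * (1 + M + delta^-1 + ln n%:R + Num.max 0 (ln eps^-1)) ^+ a in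
      [/\ mx_bounded WQ' B, mx_bounded WK' B, mx_bounded WV' B &
      forall (i : 'I_n) (l : 'I_dh),
        `|softmax_attn X WQ' WK' WV' i l - saturated_attn X WQ WK WV i l| <= eps].
Proof.
have K0 : 0 <= (1 + 2 * de%:R * `|C|) * `|C| by apply: mulr_ge0 => //; apply: addr_ge0 => //; apply: mulr_ge0.
exists ((1 + 2 * de%:R * `|C|) * `|C|), 2%N.
move=> [|n] M delta eps X WQ WK WV hX hQ hK hV hd hgap he.
  exists 0, 0, 0 => B.
  have B0 : 0 <= B by apply: mulr_ge0 => //; apply: sqr_ge0.
  by split; first [ by move=> i j; rewrite mxE normr0 | by case ].
set L := Num.max 0 (ln eps^-1).
set Vb := de%:R * `|M| * `|C|.
set lam := delta^-1 * (ln (n.+1)%:R + 2 * Vb + L).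
have L0 : 0 <= L by rewrite /L le_max lexx.
have Vb0 : 0 <= Vb by rewrite /Vb !mulr_ge0.
have ln0 : 0 <= ln (n.+1)%:R :> R by apply: ln_ge0; rewrite ler1n.
have lam0 : 0 <= lam.
  apply: mulr_ge0; first by rewrite invr_ge0 ltW.
  by apply: addr_ge0 => //; apply: addr_ge0 => //; apply: mulr_ge0.
exists (lam *: WQ), WK, WV => B.
have hs : scores X (lam *: WQ) WK = lam *: scores X WQ WK.
  by rewrite /scores -scalemxAr -scalemxAl.
have di0 : 0 <= delta^-1 by rewrite invr_ge0 ltW.
split.
- move=> t j; rewrite mxE normrM (ger0_norm lam0).
  have M0 : 0 <= M := le_trans (normr_ge0 _) (hX ord0 t).
  have C0 : 0 <= C := le_trans (normr_ge0 _) (hQ t j).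
  have [b1 _] := bound_aux (ler0n R de) M0 C0 di0 ln0 L0.
  apply: (le_trans (y := lam * C)); first by apply: ler_wpM2l => //; apply: hQ.
  by move: b1; rewrite /B /lam /Vb (ger0_norm M0) (ger0_norm C0).
- move=> t j.
  have M0 : 0 <= M := le_trans (normr_ge0 _) (hX ord0 t).
  have C0 : 0 <= C := le_trans (normr_ge0 _) (hK t j).
  have [_ b1] := bound_aux (ler0n R de) M0 C0 di0 ln0 L0.
  by apply: le_trans (hK t j) _; move: b1; rewrite /B (ger0_norm C0).
- move=> t j.
  have M0 : 0 <= M := le_trans (normr_ge0 _) (hX ord0 t).
  have C0 : 0 <= C := le_trans (normr_ge0 _) (hV t j).
  have [_ b1] := bound_aux (ler0n R de) M0 C0 di0 ln0 L0.
  by apply: le_trans (hV t j) _; move: b1; rewrite /B (ger0_norm C0).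
move=> i l.
rewrite /softmax_attn /saturated_attn hs !mxE.
set S := scores X WQ WK.
set Ms := attn_maxset S i.
set v := fun j => (X *m WV) j l.
rewrite -/(v _).
have hv : forall j, `|v j| <= Vb.
  move=> j; rewrite /v mxE.
  apply: le_trans (ler_norm_sum _ _ _) _.
  have -> : Vb = \sum_(t < de) (`|M| * `|C|).
    by rewrite sumr_const card_ord -mulr_natl /Vb mulrA.
  apply: ler_sum => t _; rewrite normrM.
  apply: ler_pM => //; apply: le_trans (ler_norm _); [exact: hX | exact: hV].
case: (@arg_maxP _ _ _ i (fun k : 'I_n.+1 => (k <= i)%N) (fun k => S i k) (leqnn i)).
move=> i0 i0le i0max.
have i0M : i0 \in Ms.
  by rewrite inE i0le /=; apply/forallP => k; apply/implyP => /i0max.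
have Mle : forall j, j \in Ms -> (j <= i)%N by move=> j; rewrite inE => /andP[].
have eqM : forall j, j \in Ms -> S i j = S i i0.
  move=> j; rewrite inE => /andP[jle /forallP H].
  by apply/le_anti; rewrite (implyP (H i0) i0le) andbT; exact: i0max.
have gap : forall k : 'I_n.+1, (k <= i)%N -> k \notin Ms -> S i k <= S i i0 - delta.
  by move=> k kle kM; have := hgap i i0 k i0M kle kM; lra.
have split_sum : forall F : 'I_n.+1 -> R,
    \sum_(j < n.+1 | (j <= i)%N) F j =
    \sum_(j in Ms) F j + \sum_(j < n.+1 | (j <= i)%N && (j \notin Ms)) F j.
  move=> F; rewrite (bigID (fun j => j \in Ms)) /=; congr (_ + _).
  apply: eq_bigl => j /=; case jM: (j \in Ms); rewrite ?andbT ?andbF //.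
  exact: Mle.
pose w := fun j => expR (lam * S i j).
pose e := expR (lam * S i i0).
pose Q := \sum_(j < n.+1 | (j <= i)%N && (j \notin Ms)) w j.
pose T := \sum_(j < n.+1 | (j <= i)%N && (j \notin Ms)) w j * v j.
pose Sv := \sum_(j in Ms) v j.
pose N : R := #|Ms|%:R.
have ew : forall j, expR ((lam *: S) i j) = w j by move=> j; rewrite mxE.
have hZ : \sum_(k < n.+1 | (k <= i)%N) expR ((lam *: S) i k) = N * e + Q.
  rewrite (eq_bigr _ (fun k _ => ew k)) split_sum; congr (_ + _).
  rewrite (eq_bigr (fun _ => e)); first by rewrite sumr_const mulr_natl.
  by move=> j jM; rewrite /w eqM.
have hnum : \sum_(j < n.+1 | (j <= i)%N) expR ((lam *: S) i j) /
       (\sum_(k < n.+1 | (k <= i)%N) expR ((lam *: S) i k)) * v j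
       = (e * Sv + T) / (N * e + Q).
  rewrite hZ.
  rewrite (eq_bigr (fun j => w j * v j / (N * e + Q))); last first.
    by move=> j _; rewrite ew mulrAC.
  rewrite -mulr_suml split_sum; congr (_ * _); congr (_ + _).
  rewrite /Sv mulr_sumr; apply: eq_bigr => j jM.
  by rewrite /w eqM.
rewrite hnum.
change (\sum_(j in Ms) (X *m WV) j l) with Sv.
change (#|Ms|%:R : R) with N.
apply: (key_ineq (nn := n.+1%:R) (x := expR (-(lam * delta))) (V := Vb)).
- by rewrite /N ler1n card_gt0; apply/set0Pn; exists i0.
- exact: expR_gt0.
- by apply: sumr_ge0 => j _; exact: expR_ge0.
- exact: he.
- apply: le_trans (ler_norm_sum _ _ _) _.
  rewrite (le_trans (ler_sum _ (fun j _ => hv j))) //.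
  by rewrite sumr_const /N mulr_natl.
- apply: le_trans (ler_norm_sum _ _ _) _.
  rewrite /Q mulr_suml; apply: ler_sum => j _.
  by rewrite normrM (ger0_norm (expR_ge0 _)) ler_wpM2l // expR_ge0.
- have hwj : forall j : 'I_n.+1, (j <= i)%N && (j \notin Ms) -> w j <= e * expR (-(lam * delta)).
    move=> j /andP[jle jM]; rewrite /w /e -expRD ler_expR.
    have := ler_wpM2l lam0 (gap j jle jM); lra.
  apply: le_trans (ler_sum _ hwj) _.
  rewrite big_mkcond /=.
  apply: le_trans (ler_sum (G := fun _ => e * expR (-(lam * delta))) _ _) _.
    by move=> j _; case: ifP => // _; rewrite mulr_ge0 // expR_ge0.
  by rewrite sumr_const card_ord -[X in _ <= X]mulrA mulr_natl ?mulr1.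
have hld : lam * delta = ln n.+1%:R + 2 * Vb + L.
  by rewrite /lam mulrAC mulVf ?gt_eqF // mul1r.
have hE : expR (lam * delta) = n.+1%:R * expR (2 * Vb) * expR L.
  by rewrite hld !expRD lnK // posrE ltr0n.
have hL : 1 <= eps * expR L.
  have : eps^-1 <= expR L.
    rewrite -[X in X <= _](@lnK _ eps^-1) ?posrE ?invr_gt0 // ler_expR.
    by rewrite /L le_max lexx orbT.
  move=> h; have ne : eps != 0 by rewrite gt_eqF.
  by rewrite -(mulfV ne) ler_pM2l.
have hVe := expR_ge1Dx (2 * Vb).
have nn0 : 0 <= n.+1%:R :> R by [].
rewrite expRN hE.
set a := expR (2 * Vb).
set b := expR L.
have a0 : 0 < a by exact: expR_gt0.
have b0 : 0 < b by exact: expR_gt0.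
have nnp : 0 < n.+1%:R :> R by rewrite ltr0n.
have -> : 2 * n.+1%:R * (n.+1%:R * a * b)^-1 * Vb = (2 * Vb) / (a * b).
  by field; rewrite !gt_eqF.
rewrite ler_pdivrMr ?mulr_gt0 //.
have h1 : 2 * Vb <= a.
  by rewrite /a; lra.
have h2 : a <= a * (eps * b) by rewrite ler_peMr // ltW.
have -> : eps * (a * b) = a * (eps * b) by ring.
lra.
Qed.
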